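(* Let $\{R_\alpha\}$ be a collection of rings. Then the direct product $R=\prod_\alpha R_\alpha$ is weakly $r$-clean if and only if each $R_\alpha$ is weakly $r$-clean and at most one $R_\alpha$ is not $r$-clean.
   Context: Rings are associative with identity. $Idem(R)$ denotes the idempotents and $Reg(R)=\{r\in R: r=ryr \text{ for some } y\in R\}$ the regular elements of $R$. A ring is $r$-clean if every element is of the form $r+e$ with $r\in Reg(R)$, $e\in Idem(R)$. An element $x$ is weakly $r$-clean if $x=r+e$ or $x=r-e$ for some $r\in Reg(R)$, $e\in Idem(R)$; a ring is weakly $r$-clean if all its elements are. *)

(* Defs.v *)
From HB Require Import structures.
From mathcomp Require Import all_boot all_order all_algebra.
From mathcomp Require Import boolp.
From Stdlib Require Import FunctionalExtensionality.

Set Implicit Arguments.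
Unset Strict Implicit.
Unset Printing Implicit Defensive.
Import GRing.Theory.
Local Open Scope ring_scope.

(* Rings: associative with identity, not necessarily commutative;
   the zero ring is allowed (pzRingType). *)

Definition is_idem (R : pzRingType) (e : R) : Prop := e * e = e.
Definition is_reg (R : pzRingType) (r : R) : Prop := exists y : R, r = r * y * r.

Definition r_clean_elt (R : pzRingType) (x : R) : Prop :=
  exists r e : R, is_reg r /\ is_idem e /\ x = r + e.
Definition r_clean_ring (R : pzRingType) : Prop := forall x : R, r_clean_elt x.

Definition weakly_r_clean_elt (R : pzRingType) (x : R) : Prop :=
  exists r e : R, is_reg r /\ is_idem e /\ (x = r + e \/ x = r - e).
Definition weakly_r_clean_ring (R : pzRingType) : Prop :=
  forall x : R, weakly_r_clean_elt x.

Definition dprod (I : Type) (R : I -> pzRingType) : Type := forall i, R i.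

Section DProd.
Variables (I : Type) (R : I -> pzRingType).
Local Notation P := (dprod R).

HB.instance Definition _ := gen_eqMixin P.
HB.instance Definition _ := gen_choiceMixin P.

Definition dp_zero : P := fun i => 0.
Definition dp_opp (f : P) : P := fun i => - f i.
Definition dp_add (f g : P) : P := fun i => f i + g i.
Definition dp_one : P := fun i => 1.
Definition dp_mul (f g : P) : P := fun i => f i * g i.

Ltac dpext := move=> *; apply: functional_extensionality_dep => i.

Lemma dp_addA : associative dp_add. Proof. by dpext; rewrite /dp_add addrA. Qed.
Lemma dp_addC : commutative dp_add. Proof. by dpext; rewrite /dp_add addrC. Qed.
Lemma dp_add0 : left_id dp_zero dp_add. Proof. by dpext; rewrite /dp_add add0r. Qed.
Lemma dp_addN : left_inverse dp_zero dp_opp dp_add.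
Proof. by dpext; rewrite /dp_add /dp_opp addNr. Qed.

HB.instance Definition _ :=
  GRing.isZmodule.Build P dp_addA dp_addC dp_add0 dp_addN.

Lemma dp_mulA : associative dp_mul. Proof. by dpext; rewrite /dp_mul mulrA. Qed.
Lemma dp_mul1 : left_id dp_one dp_mul. Proof. by dpext; rewrite /dp_mul mul1r. Qed.
Lemma dp_mulr1 : right_id dp_one dp_mul. Proof. by dpext; rewrite /dp_mul mulr1. Qed.
Lemma dp_mulDl : left_distributive dp_mul +%R.
Proof. by dpext; rewrite /dp_mul /= /dp_add mulrDl. Qed.
Lemma dp_mulDr : right_distributive dp_mul +%R.
Proof. by dpext; rewrite /dp_mul /= /dp_add mulrDr. Qed.

HB.instance Definition _ :=
  GRing.Zmodule_isPzRing.Build P dp_mulA dp_mul1 dp_mulr1 dp_mulDl dp_mulDr.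

End DProd.

(* Main.v *)
Require Import Defs.
From mathcomp Require Import all_boot all_order all_algebra.
From mathcomp Require Import boolp.
From Stdlib Require Import FunctionalExtensionality.

Set Implicit Arguments.
Unset Strict Implicit.
Unset Printing Implicit Defensive.
Import GRing.Theory.
Local Open Scope ring_scope.

Section Aux.
Variables (I : Type) (R : I -> pzRingType).
Local Notation P := (dprod R).

Lemma dp_addE (f g : P) k : (f + g) k = f k + g k. Proof. by []. Qed.
Lemma dp_mulE (f g : P) k : (f * g) k = f k * g k. Proof. by []. Qed.
Lemma dp_oppE (f : P) k : (- f) k = - f k. Proof. by []. Qed.

Lemma reg_opp (S : pzRingType) (r : S) : is_reg r -> is_reg (- r).
Proof. by case=> y hy; exists (- y); rewrite mulrNN mulrN -hy. Qed.

Lemma reg_proj (r : P) k : is_reg r -> is_reg (r k).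
Proof. by case=> y hy; exists (y k); rewrite {1}hy. Qed.

Lemma idem_proj (e : P) k : is_idem e -> is_idem (e k).
Proof. by rewrite /is_idem => h; rewrite -dp_mulE h. Qed.

Lemma dp_ext (f g : P) : (forall k, f k = g k) -> f = g.
Proof. by move=> h; apply: functional_extensionality_dep. Qed.

Lemma prod_clean (x : P) :
  (forall k, r_clean_elt (x k)) -> r_clean_elt x.
Proof.
move=> H.
pose c k := proj1_sig (cid (H k)).
have Hc k : exists e, is_reg (c k) /\ is_idem e /\ x k = c k + e.
  exact: (proj2_sig (cid (H k))).
pose d k := proj1_sig (cid (Hc k)).
have Hd k : is_reg (c k) /\ is_idem (d k) /\ x k = c k + d k.
  exact: (proj2_sig (cid (Hc k))).
have Hy k : exists y, c k = c k * y * c k by case: (Hd k) => [[y hy] _]; exists y.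
pose y k := proj1_sig (cid (Hy k)).
have Hy' k : c k = c k * y k * c k.
  exact: (proj2_sig (cid (Hy k))).
exists (c : P), (d : P); split; last split.
- by exists (y : P); apply: dp_ext => k; rewrite !dp_mulE -Hy'.
- by apply: dp_ext => k; rewrite dp_mulE; case: (Hd k) => _ [].
- by apply: dp_ext => k; rewrite dp_addE; case: (Hd k) => _ [].
Qed.

Lemma neg_clean (S : pzRingType) (x : S) :
  r_clean_elt (- x) -> exists r e : S, is_reg r /\ is_idem e /\ x = r - e.
Proof.
case=> r [e [hr [he hx]]]; exists (- r), e; split; [exact: reg_opp|split=>//].
by rewrite -[x]opprK hx opprD.
Qed.

Lemma clean_neg (S : pzRingType) (x : S) r e :
  is_reg r -> is_idem e -> x = r - e -> r_clean_elt (- x).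
Proof.
move=> hr he hx; exists (- r), e; split; [exact: reg_opp|split=>//].
by rewrite hx opprB addrC.
Qed.

Definition inj1 (i : I) (a : R i) : P := fun k =>
  match pselect (i = k) with
  | left e => eq_rect i R a k e
  | right _ => 0
  end.

Lemma inj1_at (i : I) (a : R i) : inj1 a i = a.
Proof.
rewrite /inj1; case: pselect => // e.
by rewrite (Prop_irrelevance e erefl).
Qed.

Definition inj2 (i j : I) (a : R i) (b : R j) : P := fun k =>
  match pselect (i = k) with
  | left e => eq_rect i R a k e
  | right _ => match pselect (j = k) with
    | left e => eq_rect j R b k e
    | right _ => 0 end
  end.

Lemma inj2_i (i j : I) (a : R i) (b : R j) : inj2 a b i = a.
Proof.
rewrite /inj2; case: pselect => // e.
by rewrite (Prop_irrelevance e erefl).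
Qed.

Lemma inj2_j (i j : I) (a : R i) (b : R j) : i <> j -> inj2 a b j = b.
Proof.
move=> nij; rewrite /inj2; case: pselect => // _.
case: pselect => // e.
by rewrite (Prop_irrelevance e erefl).
Qed.

End Aux.

Theorem theorem2p3 (I : Type) (R : I -> pzRingType) :
  weakly_r_clean_ring (dprod R) <->
  ((forall i, weakly_r_clean_ring (R i)) /\
   (forall i j, ~ r_clean_ring (R i) -> ~ r_clean_ring (R j) -> i = j)).
Proof.
split.
- move=> H; split.
  + move=> i a; case: (H (inj1 a)) => r [e [hr [he hx]]].
    exists (r i), (e i); split; [exact: reg_proj|split; [exact: idem_proj|]].
    by case: hx => hx; [left|right]; rewrite -(inj1_at a) hx.
  + move=> i j ni nj; have [//|nij] := pselect (i = j); exfalso.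
    have [a na] : exists a : R i, ~ r_clean_elt a.
      by apply: contrapT => h; apply: ni => a; apply: contrapT => ha; apply: h; exists a.
    have [b nb] : exists b : R j, ~ r_clean_elt b.
      by apply: contrapT => h; apply: nj => b; apply: contrapT => hb; apply: h; exists b.
    case: (H (inj2 a (- b))) => r [e [hr [he [hx|hx]]]].
    * apply: na; exists (r i), (e i); split; [exact: reg_proj|split; [exact: idem_proj|]].
      by rewrite -(inj2_i a (- b)) hx.
    * apply: nb; rewrite -[b]opprK; apply: (@clean_neg _ _ (r j) (e j)).
      -- exact: reg_proj.
      -- exact: idem_proj.
      -- by rewrite -(inj2_j a (- b) nij) hx.
- move=> [Hw Hu] x.
  case: (pselect (exists i0, ~ r_clean_ring (R i0))) => [[i0 ni0]|nall].
  + have oth k : k <> i0 -> r_clean_ring (R k).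
      by move=> nk; apply: contrapT => hk; apply: nk; exact: Hu.
    case: (Hw i0 (x i0)) => r0 [e0 [hr0 [he0 [hx0|hx0]]]].
    * case: (@prod_clean _ _ x) => [k|r [e [hr [he hx]]]].
        case: (pselect (k = i0)) => [->|nk]; last exact: oth.
        by exists r0, e0.
      by exists r, e; split=> //; split=> //; left.
    * case: (@prod_clean _ _ (- x)) => [k|r [e [hr [he hx]]]].
        case: (pselect (k = i0)) => [->|nk]; last exact: oth.
        by rewrite dp_oppE; exact: (clean_neg hr0 he0 hx0).
      case: (neg_clean (ex_intro _ r (ex_intro _ e (conj hr (conj he hx))))) => r' [e' [? [? ?]]].
      by exists r', e'; split=> //; split=> //; right.
  + have all k : r_clean_ring (R k).
      by apply: contrapT => hk; apply: nall; exists k.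
    case: (@prod_clean _ _ x) => [k|r [e [hr [he hx]]]]; first exact: all.
    by exists r, e; split=> //; split=> //; left.
Qed.
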